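(* Let $n>2$ be an integer and let $A$ be a set of $k$ integers with $k\ge 2n+1$. Then $$|S_n(A)|> (k-1)n-3\binom n2+1.$$
   Context: For a finite set $A\subseteq\mathbb Z$ and a positive integer $n$, define $$S_n(A)=\{a_1+\cdots+a_n:\ a_1,\ldots,a_n\in A,\ \text{and}\ a_i^2\neq a_j^2\ \text{for}\ 1\le i<j\le n\}.$$ *)

(* Defs.v *)
From mathcomp Require Import all_boot all_order all_algebra.
Set Implicit Arguments. Unset Strict Implicit. Unset Printing Implicit Defensive.
Import Order.TTheory GRing.Theory Num.Theory.
Local Open Scope ring_scope.

Fixpoint tuples_from (s : seq int) (n : nat) : seq (seq int) :=
  match n with
  | O => [:: [::]]
  | m.+1 => [seq x :: t | x <- s, t <- tuples_from s m]
  end.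

(* S_n(A) = { a_1+...+a_n : a_i in A, a_i^2 pairwise distinct },
   as a duplicate-free list of integers *)
Definition Sn (n : nat) (A : seq int) : seq int :=
  undup [seq (\sum_(a <- t) a) | t <- tuples_from A n
                                 & uniq [seq a ^+ 2 | a <- t]].

(* Main.v *)
Require Import Defs.
From mathcomp Require Import all_boot all_order all_algebra.
From mathcomp Require Import zify.
Import Order.TTheory GRing.Theory Num.Theory.
Local Open Scope ring_scope.

Module Aux.
Set Implicit Arguments. Unset Strict Implicit. Unset Printing Implicit Defensive.

Lemma mem_tuples_from (A : seq int) n t :
  (t \in tuples_from A n) = (size t == n) && all (mem A) t.
Proof.
elim: n t => [|n IH] t /=; first by case: t.
apply/allpairsPdep/idP.
  case=> x [u] [xA uT ->] /=; rewrite xA; move: uT; rewrite IH => /andP[/eqP su au].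
  by rewrite su au eqxx.
case: t => [//|x u] /= /andP[su /andP[xA uA]]; exists x, u; split=> //.
by rewrite IH -eqSS su uA.
Qed.

Lemma SnP n A x :
  reflect (exists t : seq int, [/\ size t = n, all (mem A) t,
             uniq [seq a ^+ 2 | a <- t] & x = \sum_(a <- t) a])
          (x \in Sn n A).
Proof.
rewrite /Sn mem_undup; apply: (iffP mapP).
  case=> t; rewrite mem_filter mem_tuples_from => /andP[uq /andP[/eqP st at_]] ->.
  by exists t.
case=> t [st at_ uq ->]; exists t => //.
by rewrite mem_filter mem_tuples_from uq st eqxx.
Qed.

Lemma Sn_mem n A t : size t = n -> all (mem A) t -> uniq [seq a ^+ 2 | a <- t] ->
  \sum_(a <- t) a \in Sn n A.
Proof. by move=> st at_ uq; apply/SnP; exists t. Qed.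

Lemma Sn_uniq n A : uniq (Sn n A).
Proof. exact: undup_uniq. Qed.

Lemma Sn_size_ge n A (s : seq int) : uniq s -> {subset s <= Sn n A} ->
  (size s <= size (Sn n A))%N.
Proof. by move=> us sub; apply: uniq_leq_size. Qed.

Lemma seq_max (s : seq int) : s != [::] -> exists2 M, M \in s & forall x, x \in s -> x <= M.
Proof.
elim: s => [//|a s IH] _.
case: (eqVneq s [::]) => [->|sn].
  by exists a; rewrite ?inE // => x; rewrite inE => /eqP->.
case: (IH sn) => M Ms HM.
case: (lerP a M) => aM.
  by exists M; rewrite ?inE ?Ms ?orbT // => x; rewrite inE => /orP[/eqP->|/HM].
exists a; rewrite ?inE ?eqxx // => x; rewrite inE => /orP[/eqP->//|/HM xM].
by apply: le_trans xM (ltW aM).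
Qed.

Lemma seq_min (s : seq int) : s != [::] -> exists2 M, M \in s & forall x, x \in s -> M <= x.
Proof.
elim: s => [//|a s IH] _.
case: (eqVneq s [::]) => [->|sn].
  by exists a; rewrite ?inE // => x; rewrite inE => /eqP->.
case: (IH sn) => M Ms HM.
case: (lerP M a) => aM.
  by exists M; rewrite ?inE ?Ms ?orbT // => x; rewrite inE => /orP[/eqP->|/HM].
exists a; rewrite ?inE ?eqxx // => x; rewrite inE => /orP[/eqP->//|/HM xM].
by apply: le_trans (ltW aM) xM.
Qed.

Lemma uniq_shift (s : seq int) c : uniq s -> uniq [seq x + c | x <- s].
Proof. by move=> us; rewrite map_inj_uniq // => x y /addIr. Qed.

Lemma sq_neq (x y : int) : x != y -> x != - y -> x ^+ 2 != y ^+ 2.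
Proof. by move=> h1 h2; rewrite eqf_sqr negb_or h1 h2. Qed.

Lemma Sn_oppP n A x : (x \in Sn n [seq - a | a <- A]) = (- x \in Sn n A).
Proof.
apply/SnP/SnP.
  case=> t [st at_ uq ->]; exists [seq - a | a <- t]; split.
  - by rewrite size_map.
  - apply/allP => a /mapP[b bt ->]; move/allP: at_ => /(_ b bt).
    by rewrite /= -{1}(opprK b) (mem_map oppr_inj).
  - by rewrite -map_comp (eq_map (g := fun a => a ^+ 2)) // => a /=; rewrite sqrrN.
  - by rewrite big_map sumrN.
case=> t [st at_ uq e]; exists [seq - a | a <- t]; split.
- by rewrite size_map.
- by apply/allP => a /mapP[b bt ->]; rewrite /= (mem_map oppr_inj); apply: (allP at_).
- by rewrite -map_comp (eq_map (g := fun a => a ^+ 2)) // => a /=; rewrite sqrrN.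
- by rewrite big_map sumrN -e opprK.
Qed.

Lemma size_Sn_opp n A : size (Sn n [seq - a | a <- A]) = size (Sn n A).
Proof.
have -> : size (Sn n A) = size [seq - x | x <- Sn n A] by rewrite size_map.
apply/perm_size/uniq_perm; rewrite ?Sn_uniq ?(map_inj_uniq oppr_inj) ?Sn_uniq //.
by move=> x; rewrite Sn_oppP -{2}(opprK x) (mem_map oppr_inj).
Qed.

Lemma sq_lt (a v : int) : 0 < v -> a ^+ 2 < v ^+ 2 -> - v < a < v.
Proof. move=> h1 h2. apply/andP; split; nia. Qed.
Lemma sq_le (a v : int) : 0 <= v -> a ^+ 2 <= v ^+ 2 -> - v <= a <= v.
Proof. move=> h1 h2. apply/andP; split; nia. Qed.
Lemma sq_eq (a v : int) : a ^+ 2 = v ^+ 2 -> a = v \/ a = - v.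
Proof. by move/eqP; rewrite eqf_sqr => /orP[]/eqP; auto. Qed.

Definition msq (A : seq int) := size (undup [seq a ^+ 2 | a <- A]).

Lemma two_sq (A : seq int) r : uniq A -> (forall a, a \in A -> a ^+ 2 = r) ->
  (size A <= 2)%N.
Proof.
case: A => [//|a A] uA h.
have sub : {subset a :: A <= [:: a; - a]}.
  move=> b bA; have := h b bA; rewrite -(h a (mem_head _ _)) => /sq_eq[->|->];
  by rewrite !inE eqxx ?orbT.
by have := uniq_leq_size uA sub.
Qed.

Lemma count_sq_le (A R : seq int) : uniq A ->
  (forall a, a \in A -> a ^+ 2 \in R) -> (size A <= 2 * size R)%N.
Proof.
elim: R A => [|r R IH] A uA h.
  by case: A uA h => [//|a A] _ /(_ a (mem_head _ _)).
pose p := fun a : int => a ^+ 2 == r.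
rewrite -(count_predC p A) -!size_filter.
have h1 : (size [seq x <- A | p x] <= 2)%N.
  apply: two_sq (filter_uniq _ uA) _ => a; rewrite mem_filter => /andP[/eqP ->].
  done.
have h3 : (size [seq x <- A | predC p x] <= 2 * size R)%N.
  apply: IH; first exact: filter_uniq.
  move=> a; rewrite mem_filter /= => /andP[ne aA].
  by move: (h a aA); rewrite inE /p in ne *; rewrite (negbTE ne).
move: h1 h3; set s1 := size _; set s2 := size _ => h1 h3 /=; lia.
Qed.

Lemma size_le_msq A : uniq A -> (size A <= 2 * msq A)%N.
Proof.
move=> uA; apply: count_sq_le => // a aA.
by rewrite mem_undup; apply: map_f.
Qed.

Lemma msq_ge n A : uniq A -> (2 * n + 1 <= size A)%N -> (n.+1 <= msq A)%N.
Proof. move=> uA h; have := size_le_msq uA; lia. Qed.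

Lemma cfg_exists n A : (n <= msq A)%N ->
  exists t : seq int, [/\ size t = n, all (mem A) t & uniq [seq a ^+ 2 | a <- t]].
Proof.
move=> hn; rewrite /msq in hn; set R := undup _ in hn.
pose f r := nth 0 A (index r [seq a ^+ 2 | a <- A]).
have fP r : r \in R -> f r \in A /\ (f r) ^+ 2 = r.
  rewrite mem_undup => rA; have hi : (index r [seq a ^+ 2 | a <- A] < size A)%N.
    by rewrite -(size_map (fun a => a ^+ 2)) index_mem.
  split; first by apply: mem_nth.
  by rewrite /f -(nth_map 0 0 (fun a => a ^+ 2) hi) nth_index.
exists [seq f r | r <- take n R]; split.
- by rewrite size_map size_take; case: ltnP hn => //; lia.
- by apply/allP => x /mapP[r /mem_take rR ->]; case: (fP r rR).
- have -> : [seq x ^+ 2 | x <- [seq f r | r <- take n R]] = take n R.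
    rewrite -map_comp -[RHS]map_id; apply/eq_in_map => r /mem_take rR /=.
    by case: (fP r rR).
  by rewrite take_uniq // undup_uniq.
Qed.

Lemma Sn_nonempty n A : (n <= msq A)%N -> Sn n A != [::].
Proof.
move=> /cfg_exists[t [st at_ ut]].
by apply/eqP => h; have := Sn_mem st at_ ut; rewrite h.
Qed.

Lemma sum_rem (t : seq int) a : a \in t -> \sum_(x <- t) x = a + \sum_(x <- rem a t) x.
Proof. by move=> at_; rewrite (perm_big _ (perm_to_rem at_)) big_cons. Qed.

Lemma uniq_sq_rem (t : seq int) a : uniq [seq x ^+ 2 | x <- t] ->
  uniq [seq x ^+ 2 | x <- rem a t].
Proof. by apply: subseq_uniq; apply: map_subseq; apply: rem_subseq. Qed.

Lemma uniq_of_sq (t : seq int) : uniq [seq x ^+ 2 | x <- t] -> uniq t.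
Proof. exact: map_uniq. Qed.

Lemma all_rem (A t : seq int) a : all (mem A) t -> all (mem A) (rem a t).
Proof. by move=> /allP h; apply/allP => x /mem_rem /h. Qed.

Lemma Sn_sub n (A B : seq int) : {subset A <= B} -> {subset Sn n A <= Sn n B}.
Proof.
move=> sub x /SnP[t [st at_ ut ->]]; apply: Sn_mem => //.
by apply/allP => y /(allP at_) /sub.
Qed.

Lemma uniq_cat_lt (s1 s2 : seq int) : uniq s1 -> uniq s2 ->
  (forall x y, x \in s1 -> y \in s2 -> x < y) -> uniq (s1 ++ s2).
Proof.
move=> u1 u2 h; rewrite cat_uniq u1 u2 andbT; apply/hasPn => y ys2; apply/negP => ys1.
by have := h y y ys1 ys2; rewrite ltxx.
Qed.

Lemma cfg_swap (A t : seq int) a y :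
  all (mem A) t -> uniq [seq x ^+ 2 | x <- t] -> a \in t -> y \in A ->
  y ^+ 2 \notin [seq x ^+ 2 | x <- rem a t] ->
  \sum_(x <- t) x - a + y \in Sn (size t) A.
Proof.
move=> at_ ut ain yA yn.
have -> : \sum_(x <- t) x - a + y = \sum_(x <- y :: rem a t) x.
  by rewrite big_cons (sum_rem ain) [a + _]addrC addrK addrC.
apply: Sn_mem.
- by rewrite /= size_rem //; case: (t) ain.
- by rewrite /= yA all_rem.
- by rewrite /= yn uniq_sq_rem.
Qed.

Lemma sq_notin_rem (t : seq int) a : uniq [seq x ^+ 2 | x <- t] -> a \in t ->
  a ^+ 2 \notin [seq x ^+ 2 | x <- rem a t].
Proof.
move=> ut at_; move: ut; rewrite (perm_uniq (perm_map _ (perm_to_rem at_))) /=.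
by case/andP.
Qed.

Lemma notin_rem_sq (t : seq int) a y : y ^+ 2 \notin [seq x ^+ 2 | x <- t] ->
  y ^+ 2 \notin [seq x ^+ 2 | x <- rem a t].
Proof. by apply: contra => /mapP[z /mem_rem zt ->]; apply: map_f. Qed.

Lemma swapS n (A t : seq int) M a y :
  size t = n -> all (mem A) t -> uniq [seq x ^+ 2 | x <- t] -> M = \sum_(x <- t) x ->
  a \in t -> y \in A -> y ^+ 2 \notin [seq x ^+ 2 | x <- rem a t] ->
  M - a + y \in Sn n A.
Proof. by move=> st at_ ut -> ain yA yn; rewrite -st; apply: cfg_swap. Qed.

Lemma Sn_cat_ge n A (s1 s2 : seq int) : uniq s1 -> uniq s2 ->
  (forall x y, x \in s1 -> y \in s2 -> x < y) ->
  {subset s1 <= Sn n A} -> {subset s2 <= Sn n A} ->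
  (size s1 + size s2 <= size (Sn n A))%N.
Proof.
move=> u1 u2 lt h1 h2; rewrite -size_cat; apply: Sn_size_ge.
  exact: uniq_cat_lt.
by move=> x; rewrite mem_cat => /orP[/h1|/h2].
Qed.

Lemma exists_new_sq (A T : seq int) n :
  size T = n -> (n < msq A)%N ->
  exists2 y, y \in A & y ^+ 2 \notin [seq x ^+ 2 | x <- T].
Proof.
move=> sT hm.
case: (boolP (all (fun y => y ^+ 2 \in [seq x ^+ 2 | x <- T]) A)) => [hall|]; last first.
  by case/allPn => y yA yn; exists y.
have : (msq A <= n)%N.
  rewrite /msq -sT -(size_map (fun a => a ^+ 2) T); apply: uniq_leq_size.
    exact: undup_uniq.
  by move=> r; rewrite mem_undup => /mapP[y yA ->]; apply: (allP hall).
lia.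
Qed.

Lemma R1 n A v : (0 < n)%N -> uniq A -> v \in A -> 0 < v ->
  (forall a, a \in A -> a ^+ 2 <= v ^+ 2) -> (n.+1 <= msq (rem v A))%N ->
  (size (Sn n (rem v A)) + n <= size (Sn n A))%N.
Proof.
move=> n0 uA vA v0 hsq hm; set A' := rem v A in hm *.
have vA' : v \notin A' by rewrite mem_rem_uniq // inE eqxx.
have subA : {subset A' <= A} by move=> x /mem_rem.
have ne : Sn n A' != [::] by apply: Sn_nonempty; lia.
case: (seq_max ne) => M MS HM.
case/SnP: MS => T [sT aT uT eM].
have aTA : all (mem A) T by apply/allP => x /(allP aT) /subA.
have Tnv : - v \notin T.
  apply/negP => vT.
  have [y yA yn] := exists_new_sq sT (hm : (n < msq A')%N).
  have := swapS sT aT uT eM vT yA (notin_rem_sq _ yn).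
  move/HM => hle.
  have yne : y != - v.
    by apply: contra yn => /eqP ->; apply: map_f.
  have := sq_le (ltW v0) (hsq y (subA y yA)); move=> /andP[h1 h2].
  lia.
have hT : forall t, t \in T -> t < v.
  move=> t tT; have tA' := allP aT t tT.
  have := sq_le (ltW v0) (hsq t (subA t tA')) => /andP[_ h2].
  have : t != v by apply: contra vA' => /eqP <-.
  lia.
have h := @Sn_cat_ge n A (Sn n A') [seq M - t + v | t <- T].
rewrite size_map sT in h; apply: h.
- exact: Sn_uniq.
- rewrite map_inj_uniq; first exact: uniq_of_sq.
  by move=> x y /= h; lia.
- move=> x y /HM xM /mapP[t tT ->]; have := hT t tT; lia.
- exact: Sn_sub.
- move=> y /mapP[t tT ->]; apply: swapS sT aTA uT eM tT vA _.
  apply/negP => /mapP[z /mem_rem zT /esym/sq_eq [ez|ez]].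
    have zA : z \in A' := allP aT z zT.
    by move: vA'; rewrite -ez zA.
  by move: Tnv; rewrite -ez zT.
Qed.

Lemma size_filter_sq (B T : seq int) n : uniq B -> size T = n ->
  (size B <= size [seq a <- B | a ^+ 2 \notin [seq x ^+ 2 | x <- T]] + 2 * n)%N.
Proof.
move=> uB sT.
have h : (size [seq a <- B | a ^+ 2 \in [seq x ^+ 2 | x <- T]] <= 2 * n)%N.
  rewrite -sT -(size_map (fun a => a ^+ 2) T); apply: count_sq_le.
    exact: filter_uniq.
  by move=> a; rewrite mem_filter => /andP[].
have e := count_predC (fun a => a ^+ 2 \in [seq x ^+ 2 | x <- T]) B.
rewrite -!size_filter in e.
have -> : [seq a <- B | a ^+ 2 \notin [seq x ^+ 2 | x <- T]] =
          [seq a <- B | predC (fun a => a ^+ 2 \in [seq x ^+ 2 | x <- T]) a] by [].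
move: h e.
set s1 := size [seq a <- B | a ^+ 2 \in [seq x ^+ 2 | x <- T]].
set s2 := size [seq a <- B | predC (fun a => a ^+ 2 \in [seq x ^+ 2 | x <- T]) a].
move=> h1 h2; have h3 : (s1 + s2)%N = size B := h2; clear h2; clearbody s1 s2; lia.
Qed.

Lemma R2 n A v : uniq A -> v \in A -> 0 < v ->
  (forall a, a \in A -> a != v -> a ^+ 2 < v ^+ 2) -> Sn n (rem v A) != [::] ->
  (size (Sn n (rem v A)) + (size (rem v A) - 2 * n) <= size (Sn n.+1 A))%N.
Proof.
move=> uA vA v0 hsq ne; set A' := rem v A in ne *.
have vA' : v \notin A' by rewrite mem_rem_uniq // inE eqxx.
have subA : {subset A' <= A} by move=> x /mem_rem.
have uA' : uniq A' by apply: rem_uniq.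
have hA' : forall a, a \in A' -> a ^+ 2 < v ^+ 2.
  move=> a aA; apply: hsq; first exact: subA.
  by apply: contra vA' => /eqP <-.
case: (seq_min ne) => m mS Hm.
case/SnP: mS => T [sT aT uT em].
set U := [seq a <- A' | a ^+ 2 \notin [seq x ^+ 2 | x <- T]].
have hU := size_filter_sq uA' sT.
have h := @Sn_cat_ge n.+1 A [seq x + m | x <- U] [seq y + v | y <- Sn n A'].
rewrite !size_map in h; apply: leq_trans (h _ _ _ _ _); first move: hU; rewrite -/U; set a1 := size U; set a2 := size A'; set a3 := size (Sn n A'); idtac.
clearbody a1 a2 a3; lia.
- by apply: uniq_shift; apply: filter_uniq.
- exact/uniq_shift/Sn_uniq.
- move=> x y /mapP[a aU ->] /mapP[b bS ->].
  move: aU; rewrite mem_filter => /andP[_ aA].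
  have := sq_lt v0 (hA' a aA); have := Hm b bS; lia.
- move=> x /mapP[a aU ->]; move: aU; rewrite mem_filter => /andP[an aA].
  have -> : a + m = \sum_(x <- a :: T) x by rewrite big_cons em.
  apply: Sn_mem; first by rewrite /= sT.
    by rewrite /= (subA a aA); apply/allP => y /(allP aT) /subA.
  by rewrite /= an.
- move=> x /mapP[y /SnP[t [st at_ ut ey]] ->].
  have -> : y + v = \sum_(x <- v :: t) x by rewrite big_cons ey addrC.
  apply: Sn_mem; first by rewrite /= st.
    by rewrite /= vA; apply/allP => z /(allP at_) /subA.
  rewrite /= ut andbT; apply/negP => /mapP[z zt ez].
  by have := hA' z (allP at_ z zt); rewrite ez ltxx.
Qed.

Lemma R3_final n (A B : seq int) v M (Wl : seq int) :
  {subset B <= A} -> v \in A -> - v \in A ->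
  (forall b, b \in B -> b ^+ 2 != v ^+ 2) ->
  (forall x, x \in Sn n B -> x <= M) ->
  uniq Wl -> {subset Wl <= Sn n B} -> (forall w, w \in Wl -> M - 2 * v < w) ->
  (size (Sn n B) + size Wl <= size (Sn n.+1 A))%N.
Proof.
move=> subB vA mvA hB HM uW sW lW.
have h := @Sn_cat_ge n.+1 A [seq x - v | x <- Sn n B] [seq w + v | w <- Wl].
rewrite !size_map in h; apply: h.
- exact/uniq_shift/Sn_uniq.
- exact/uniq_shift.
- move=> x y /mapP[a aS ->] /mapP[b bW ->].
  have := HM a aS; have := lW b bW; lia.
- move=> x /mapP[y /SnP[t [st at_ ut ey]] ->].
  have -> : y - v = \sum_(x <- - v :: t) x by rewrite big_cons ey addrC.
  apply: Sn_mem; first by rewrite /= st.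
    by rewrite /= mvA; apply/allP => z /(allP at_) /subB.
  rewrite /= ut andbT sqrrN; apply/negP => /mapP[z zt ez].
  by have := hB z (allP at_ z zt); rewrite ez eqxx.
- move=> x /mapP[w /sW /SnP[t [st at_ ut ey]] ->].
  have -> : w + v = \sum_(x <- v :: t) x by rewrite big_cons ey addrC.
  apply: Sn_mem; first by rewrite /= st.
    by rewrite /= vA; apply/allP => z /(allP at_) /subB.
  rewrite /= ut andbT; apply/negP => /mapP[z zt ez].
  by have := hB z (allP at_ z zt); rewrite ez eqxx.
Qed.

Lemma size_filter_sq2 (B T : seq int) n t : uniq B -> uniq T -> size T = n -> t \in T ->
  ~~ ((- t \in B) && (t != 0)) ->
  (size B < size [seq a <- B | a ^+ 2 \notin [seq x ^+ 2 | x <- T]] + 2 * n)%N.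
Proof.
move=> uB uT sT tT ht.
have h : (size [seq a <- B | a ^+ 2 \in [seq x ^+ 2 | x <- T]] <= n + n.-1)%N.
  have -> : (n + n.-1 = size (T ++ [seq - x | x <- rem t T]))%N.
    by rewrite size_cat size_map size_rem // sT.
  apply: uniq_leq_size; first exact: filter_uniq.
  move=> g; rewrite mem_filter => /andP[/mapP[s sT' /sq_eq[->|->]] gB];
    rewrite mem_cat ?sT' //.
  case: (eqVneq s t) => [est|nst].
    subst s; move: ht; rewrite gB /= negbK => /eqP t0.
    by rewrite t0 oppr0 -t0 tT.
  by rewrite map_f ?orbT // mem_rem_uniq // inE nst sT'.
have e := count_predC (fun a => a ^+ 2 \in [seq x ^+ 2 | x <- T]) B.
rewrite -!size_filter in e.
have -> : [seq a <- B | a ^+ 2 \notin [seq x ^+ 2 | x <- T]] =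
          [seq a <- B | predC (fun a => a ^+ 2 \in [seq x ^+ 2 | x <- T]) a] by [].
move: h e.
set s1 := size [seq a <- B | a ^+ 2 \in [seq x ^+ 2 | x <- T]].
set s2 := size [seq a <- B | predC (fun a => a ^+ 2 \in [seq x ^+ 2 | x <- T]) a].
move=> h1 h2; have h3 : (s1 + s2)%N = size B := h2; clear h2.
have n0 : (0 < n)%N by rewrite -sT; case: (T) tT.
clearbody s1 s2; lia.
Qed.

Ltac slia :=
  repeat match goal with
  | H : context [ Sn _ _ ] |- _ => clear H
  | H : forall _, _ |- _ => clear H
  | H : is_true (uniq _) |- _ => clear H
  | H : is_true (_ \in _) |- _ => clear H
  | H : is_true (_ \notin _) |- _ => clear H
  | H : is_true (all _ _) |- _ => clear H
  | H : is_true (_ != [::]) |- _ => clear H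
  end; lia.

Lemma R3_chain n (B : seq int) v M (T : seq int) :
  (0 < n)%N -> uniq B -> (forall b, b \in B -> - v < b < v) ->
  (2 * n + 1 <= size B)%N ->
  size T = n -> all (mem B) T -> uniq [seq x ^+ 2 | x <- T] -> M = \sum_(x <- T) x ->
  (forall x, x \in Sn n B -> x <= M) ->
  exists Wl : seq int, [/\ uniq Wl, {subset Wl <= Sn n B},
     (forall w, w \in Wl -> M - 2 * v < w) & (size B - n + 1 <= size Wl)%N].
Proof.
move=> n0 uB hv hB sT aT uT eM HM.
have MS : M \in Sn n B by rewrite eM; apply: Sn_mem.
have hF := size_filter_sq uB sT.
set F := [seq a <- B | a ^+ 2 \notin [seq x ^+ 2 | x <- T]] in hF.
have uF : uniq F by apply: filter_uniq.
have Fne : F != [::].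
  apply/eqP => e; move: hF hB; rewrite e /=; set s := size B; clearbody s; slia.
case: (seq_min Fne) => f fF Hf.
have Tne : T != [::] by apply/eqP => e; move: sT; rewrite e /=; slia.
case: (seq_min Tne) => t0 t0T Ht0.
have FB : {subset F <= B} by move=> y; rewrite mem_filter => /andP[].
have Fn : forall y, y \in F -> y ^+ 2 \notin [seq x ^+ 2 | x <- T].
  by move=> y; rewrite mem_filter => /andP[].
have TB : forall t, t \in T -> t \in B by move=> t /(allP aT).
have inX : forall t y, t \in T -> y \in F -> M - t + y \in Sn n B.
  move=> t y tT yF; apply: swapS sT aT uT eM tT (FB y yF) (notin_rem_sq _ (Fn y yF)).
have ylt : forall t y, t \in T -> y \in F -> y < t.
  move=> t y tT yF; have := HM _ (inX t y tT yF).
  have : y != t by apply: contra (Fn y yF) => /eqP ->; apply: map_f.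
  slia.
have bnd : forall t y, t \in B -> y \in B -> M - 2 * v < M - t + y.
  move=> t y tB yB; have := hv t tB; have := hv y yB; slia.
have uTl : uniq T by apply: uniq_of_sq.
set W1 := [seq M - t + f | t <- T].
set Fr := rem f F.
have uFr : uniq Fr by apply: rem_uniq.
have FrP : forall y, y \in Fr -> (y != f) && (y \in F).
  by move=> y; rewrite /Fr mem_rem_uniq // inE.
have sFr : size Fr = (size F).-1 by apply: size_rem.
set W2 := [seq M - t0 + y | y <- Fr].
have uW1 : uniq W1 by rewrite map_inj_uniq // => x y /= h; slia.
have uW2 : uniq W2 by rewrite map_inj_uniq // => x y /= h; slia.
have W1le : forall w, w \in W1 -> w <= M - t0 + f.
  by move=> w /mapP[t tT ->]; have := Ht0 t tT; slia.
have W2b : forall w, w \in W2 -> M - t0 + f < w < M.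
  move=> w /mapP[y /FrP /andP[yf yF] ->]; have := Hf y yF; have := ylt t0 y t0T yF.
  slia.
have sW1 : {subset W1 <= Sn n B} by move=> w /mapP[t tT ->]; apply: inX.
have sW2 : {subset W2 <= Sn n B}.
  by move=> w /mapP[y /FrP /andP[_ yF] ->]; apply: inX.
have bW1 : forall w, w \in W1 -> M - 2 * v < w.
  by move=> w /mapP[t tT ->]; apply: bnd; [apply: TB | apply: FB].
have bW2 : forall w, w \in W2 -> M - 2 * v < w.
  by move=> w /mapP[y /FrP /andP[_ yF] ->]; apply: bnd; [apply: TB | apply: FB].
have bM : M - 2 * v < M by have := hv t0 (TB t0 t0T); slia.
have szF : (0 < size F)%N by case: (F) Fne.
case: (boolP (all (fun t => (- t \in B) && (t != 0)) T)) => [hall | /allPn [t tT ht]];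
  last first.
  have hF2 := size_filter_sq2 uB uTl sT tT ht; rewrite -/F in hF2.
  exists (W1 ++ W2 ++ [:: M]); split.
  - apply: uniq_cat_lt => //.
      apply: uniq_cat_lt => // x y xW2; rewrite inE => /eqP ->.
      by case/andP: (W2b x xW2).
    move=> x y xW1; rewrite mem_cat mem_seq1 => /orP[yW2|/eqP ->].
      by have := W1le x xW1; case/andP: (W2b y yW2); slia.
    by have := W1le x xW1; have := Hf f fF; have := ylt t0 f t0T fF; slia.
  - by move=> w; rewrite !mem_cat mem_seq1 => /orP[/sW1|/orP[/sW2|/eqP ->]].
  - by move=> w; rewrite !mem_cat mem_seq1 => /orP[/bW1|/orP[/bW2|/eqP ->]].
  - rewrite !size_cat !size_map sFr sT /=.
    move: hF2 szF; set a := size F; set b := size B; clearbody a b; slia.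
have t0B : - t0 \in B by case/andP: (allP hall t0 t0T).
have t0n : t0 != 0 by case/andP: (allP hall t0 t0T).
have mt0 : M - t0 + - t0 \in Sn n B.
  apply: (swapS sT aT uT eM t0T t0B); rewrite sqrrN; exact: (sq_notin_rem uT t0T).
have t0pos : 0 < t0 by have := HM _ mt0; slia.
have fne : f != - t0.
  by apply: contra (Fn f fF) => /eqP ->; rewrite sqrrN; apply: map_f.
case: (ltrP f (- t0)) => hf.
  have nt0 : - t0 \notin Fr.
    by apply/negP => /FrP /andP[_ /Fn]; rewrite sqrrN => /negP; apply; apply: map_f.
  set W2' := [seq M - t0 + y | y <- - t0 :: Fr].
  have uW2' : uniq W2' by rewrite map_inj_uniq /= ?nt0 // => x y /= h; slia.
  have W2b' : forall w, w \in W2' -> M - t0 + f < w < M.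
    move=> w; rewrite /W2' map_cons inE => /orP[/eqP ->|/W2b //]; slia.
  exists (W1 ++ W2' ++ [:: M]); split.
  - apply: uniq_cat_lt => //.
      apply: uniq_cat_lt => // x y xW2; rewrite inE => /eqP ->.
      by case/andP: (W2b' x xW2).
    move=> x y xW1; rewrite mem_cat mem_seq1 => /orP[yW2|/eqP ->].
      by have := W1le x xW1; case/andP: (W2b' y yW2); slia.
    by have := W1le x xW1; have := Hf f fF; have := ylt t0 f t0T fF; slia.
  - move=> w; rewrite !mem_cat mem_seq1 => /orP[/sW1//|/orP[|/eqP ->//]].
    by rewrite /W2' map_cons inE => /orP[/eqP ->|/sW2].
  - move=> w; rewrite !mem_cat mem_seq1 => /orP[/bW1//|/orP[|/eqP ->//]].
    rewrite /W2' map_cons inE => /orP[/eqP ->|/bW2//].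
    by apply: bnd; [apply: TB|].
  - rewrite !size_cat !size_map /= sFr sT.
    move: hF szF; set a := size F; set b := size B; clearbody a b; slia.
case: (seq_max Tne) => tm tmT Htm.
have tmB : - tm \in B by case/andP: (allP hall tm tmT).
have mtm : M - tm + - tm \in Sn n B.
  apply: (swapS sT aT uT eM tmT tmB); rewrite sqrrN; exact: (sq_notin_rem uT tmT).
have hf' : - t0 < f by rewrite lt_neqAle hf eq_sym fne.
exists ([:: M - tm + - tm] ++ W1 ++ W2 ++ [:: M]); split.
- apply: uniq_cat_lt => //.
    apply: uniq_cat_lt => //.
      apply: uniq_cat_lt => // x y xW2; rewrite inE => /eqP ->.
      by case/andP: (W2b x xW2).
    move=> x y xW1; rewrite mem_cat mem_seq1 => /orP[yW2|/eqP ->].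
      by have := W1le x xW1; case/andP: (W2b y yW2); slia.
    by have := W1le x xW1; have := Hf f fF; have := ylt t0 f t0T fF; slia.
  move=> x y; rewrite inE => /eqP ->.
  rewrite !mem_cat mem_seq1 => /orP[|/orP[yW2|/eqP ->]].
  + by move=> /mapP[t tT ->]; have := Htm t tT; have := Ht0 tm tmT; slia.
  + case/andP: (W2b y yW2) => h1 _; have := Ht0 tm tmT; slia.
  + have := Hf f fF; have := ylt tm f tmT fF; have := Ht0 tm tmT; slia.
- move=> w; rewrite !mem_cat !mem_seq1 => /orP[/eqP ->//|/orP[/sW1//|/orP[/sW2//|/eqP ->//]]].
- move=> w; rewrite !mem_cat !mem_seq1 => /orP[/eqP ->|/orP[/bW1//|/orP[/bW2//|/eqP ->//]]].
  by apply: bnd; [apply: TB|].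
- rewrite !size_cat !size_map /= sFr sT.
  move: hF szF; set a := size F; set b := size B; clearbody a b; slia.
Qed.

Lemma R3 n A v : (0 < n)%N -> uniq A -> v \in A -> - v \in A -> 0 < v ->
  (forall a, a \in A -> a ^+ 2 != v ^+ 2 -> a ^+ 2 < v ^+ 2) ->
  (2 * n + 1 <= size [seq a <- A | a ^+ 2 != v ^+ 2])%N ->
  (size (Sn n [seq a <- A | a ^+ 2 != v ^+ 2]) +
     (size [seq a <- A | a ^+ 2 != v ^+ 2] - n + 1) <= size (Sn n.+1 A))%N.
Proof.
move=> n0 uA vA mvA v0 hsq.
set B := [seq a <- A | a ^+ 2 != v ^+ 2] => hB.
have uB : uniq B by apply: filter_uniq.
have subB : {subset B <= A} by move=> x; rewrite mem_filter => /andP[].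
have hBsq : forall b, b \in B -> b ^+ 2 != v ^+ 2.
  by move=> b; rewrite mem_filter => /andP[].
have hv : forall b, b \in B -> - v < b < v.
  move=> b bB; apply: sq_lt => //; apply: hsq; [exact: subB | exact: hBsq].
have ne : Sn n B != [::].
  by apply: Sn_nonempty; have := msq_ge uB hB; lia.
case: (seq_max ne) => M MS HM.
case/SnP: MS => T [sT aT uT eM].
have [Wl [uW sW lW szW]] := R3_chain n0 uB hv hB sT aT uT eM HM.
apply: leq_trans (R3_final subB vA mvA hBsq HM uW sW lW).
by rewrite leq_add2l.
Qed.

Definition Tb (n k : nat) : int := (k%:Z - 1) * n%:Z - 3 * ('C(n, 2))%:Z + 2.

Lemma size_filter_v (A : seq int) (v : int) : uniq A -> v \in A -> - v \in A -> 0 < v ->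
  size [seq a <- A | a ^+ 2 != v ^+ 2] = (size A - 2)%N.
Proof.
move=> uA vA mvA v0.
have h1 : (size [seq a <- A | a ^+ 2 == v ^+ 2] <= 2)%N.
  apply: two_sq (filter_uniq _ uA) _ => a; rewrite mem_filter => /andP[/eqP ->].
  done.
have h2 : (2 <= size [seq a <- A | a ^+ 2 == v ^+ 2])%N.
  have -> : 2%N = size [:: v; - v] by [].
  apply: uniq_leq_size.
    rewrite /= inE andbT; apply/eqP => h; lia.
  move=> x; rewrite !inE mem_filter => /orP[] /eqP ->; rewrite ?sqrrN eqxx //.
have e := count_predC (fun a => a ^+ 2 == v ^+ 2) A.
rewrite -!size_filter in e.
have -> : [seq a <- A | a ^+ 2 != v ^+ 2] =
          [seq a <- A | predC (fun a => a ^+ 2 == v ^+ 2) a] by [].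
move: h1 h2 e.
set s1 := size [seq a <- A | a ^+ 2 == v ^+ 2].
set s2 := size [seq a <- A | predC (fun a => a ^+ 2 == v ^+ 2) a].
move=> h1 h2 h3; have h4 : (s1 + s2)%N = size A := h3; clear h3.
clearbody s1 s2; lia.
Qed.

Lemma step n (A : seq int) (v : int) : (3 <= n)%N ->
  (forall B : seq int, uniq B -> (2 * n + 1 <= size B)%N -> Tb n (size B) <= (size (Sn n B))%:Z) ->
  uniq A -> (2 * n.+1 + 1 <= size A)%N -> v \in A -> 0 < v ->
  (forall a, a \in A -> a ^+ 2 <= v ^+ 2) ->
  Tb n.+1 (size A) <= (size (Sn n.+1 A))%:Z.
Proof.
move=> n3 IH uA hk vA v0 hsq.
have binS2 : 'C(n.+1, 2) = ('C(n, 2) + n)%N by rewrite binS bin1.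
case: (boolP (- v \in A)) => mvA.
  have hsq' : forall a, a \in A -> a ^+ 2 != v ^+ 2 -> a ^+ 2 < v ^+ 2.
    by move=> a aA ne; rewrite lt_neqAle ne hsq.
  have sB := size_filter_v uA vA mvA v0.
  have hB : (2 * n + 1 <= size [seq a <- A | a ^+ 2 != v ^+ 2])%N.
    by rewrite sB; move: hk; set k := size A; clearbody k; lia.
  have h := R3 (ltnW (ltnW n3)) uA vA mvA v0 hsq' hB.
  have h' := IH _ (filter_uniq _ uA) hB.
  move: h h'; rewrite sB /Tb binS2.
  set k := size A; set s1 := size (Sn n _); set s2 := size (Sn n.+1 A).
  move=> h h'; clearbody k s1 s2; move: hk h h'; rewrite !PoszD. nia.
have hsq' : forall a, a \in A -> a != v -> a ^+ 2 < v ^+ 2.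
  move=> a aA ne; rewrite lt_neqAle hsq // andbT eqf_sqr negb_or ne /=.
  by apply: contra mvA => /eqP <-.
have sA' : size (rem v A) = (size A).-1 by apply: size_rem.
have hA' : (2 * n + 1 <= size (rem v A))%N.
  by rewrite sA'; move: hk; set k := size A; clearbody k; lia.
have h' := IH _ (rem_uniq _ uA) hA'.
have ne : Sn n (rem v A) != [::].
  apply: Sn_nonempty; have := msq_ge (rem_uniq v uA) hA'; lia.
have h := R2 uA vA v0 hsq' ne.
move: h h'; rewrite sA' /Tb binS2.
set k := size A; set s1 := size (Sn n _); set s2 := size (Sn n.+1 A).
move=> h h'; clearbody k s1 s2; move: hk h h'. nia.
Qed.

Lemma mem3 (A : seq int) x y z : x \in A -> y \in A -> z \in A ->
  x ^+ 2 != y ^+ 2 -> x ^+ 2 != z ^+ 2 -> y ^+ 2 != z ^+ 2 -> x + y + z \in Sn 3 A.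
Proof.
move=> xA yA zA h1 h2 h3.
have -> : x + y + z = \sum_(a <- [:: x; y; z]) a by rewrite !big_cons big_nil addr0 addrA.
apply: Sn_mem => //=; first by rewrite xA yA zA.
by rewrite !inE negb_or h1 h2 h3.
Qed.

Lemma ge_list n A (L : seq int) : uniq L -> all (mem (Sn n A)) L ->
  (size L <= size (Sn n A))%N.
Proof. by move=> uL /allP h; apply: Sn_size_ge. Qed.

Ltac clr := repeat match goal with
  | H : is_true (_ \in _) |- _ => clear H
  | H : is_true (all _ _) |- _ => clear H
  end.
Ltac uniq_lia := clr; rewrite /= ?inE ?negb_or; repeat (apply/andP; split); try done;
  apply/eqP; lia.
Ltac all_mem3 := rewrite /=; repeat (apply/andP; split); try done;
  apply: mem3 => //; apply: sq_neq; clr; lia.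

Lemma F0 (A : seq int) a b c v : a \in A -> b \in A -> c \in A -> v \in A ->
  a ^+ 2 != b ^+ 2 -> a ^+ 2 != c ^+ 2 -> b ^+ 2 != c ^+ 2 ->
  a ^+ 2 != v ^+ 2 -> b ^+ 2 != v ^+ 2 -> c != v ->
  (2 <= size (Sn 3 A))%N.
Proof.
move=> aA bA cA vA h1 h2 h3 h4 h5 h6.
apply: (@ge_list 3 A [:: a + b + c; a + b + v]).
  by rewrite /= inE andbT; apply: contra h6 => /eqP h; apply/eqP; lia.
rewrite /= !mem3 //; by rewrite eq_sym.
Qed.

Lemma F1 (A : seq int) p a b v : 0 < p -> p \in A -> - p \in A -> a \in A -> b \in A ->
  v \in A -> a != p -> a != - p -> b != p -> b != - p -> a != b -> a != - b ->
  -v < a < v -> -v < b < v -> p < v ->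
  (5 <= size (Sn 3 A))%N.
Proof.
move=> p0 pA mpA aA bA vA h1 h2 h3 h4 h5 h6 /andP[h7 h8] /andP[h9 h10] h11.
apply: (@ge_list 3 A [:: a + b + p; a + b - p; v + p + a; v + p + b; v + a + b]).
  uniq_lia.
all_mem3.
Qed.

Lemma F2 (A : seq int) p q e v : 0 < p -> p < q -> q < v -> -v < e < v ->
  e != p -> e != - p -> e != q -> e != - q ->
  p \in A -> - p \in A -> q \in A -> - q \in A -> e \in A -> v \in A ->
  (8 <= size (Sn 3 A))%N.
Proof.
move=> h1 h2 h3 /andP[h4 h5] h6 h7 h8 h9 pA mpA qA mqA eA vA.
have [k1|k1] := eqVneq (e + 2 * p - q) 0.
  apply: (@ge_list 3 A [:: e + p - q; e - p - q; v + p + q; v + p - q; v - p + q;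
                          v - p - q; v + e + q; v + e - q]); [uniq_lia | all_mem3].
have [k2|k2] := eqVneq (e + 2 * p - v) 0; last first.
  apply: (@ge_list 3 A [:: e + p + q; e + p - q; e - p + q; e - p - q; v + p + q;
                          v - p + q; v + e + p; v + e + q]); [uniq_lia | all_mem3].
have [k3|k3] := eqVneq (2 * p - 2 * q - e + v) 0; last first.
  apply: (@ge_list 3 A [:: e + p + q; e + p - q; e - p + q; e - p - q; v + p + q;
                          v + p - q; v + e + p; v + e + q]); [uniq_lia | all_mem3].
have [k4|k4] := eqVneq (2 * p + q - e) 0.
  apply: (@ge_list 3 A [:: e + p + q; e + p - q; e - p + q; e - p - q; v + p + q;
                          v + e + p; v + e + q; v + e - q]); [uniq_lia | all_mem3].
apply: (@ge_list 3 A [:: e + p + q; e + p - q; e - p + q; e - p - q; v + p + q;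
                        v + e + p; v + e - p; v + e + q]); [uniq_lia | all_mem3].
Qed.

Lemma F3 (A : seq int) x y z v : 0 < x -> x < y -> y < z -> z < v ->
  x \in A -> - x \in A -> y \in A -> - y \in A -> z \in A -> - z \in A -> v \in A ->
  (11 <= size (Sn 3 A))%N.
Proof.
move=> h1 h2 h3 h4 xA mxA yA myA zA mzA vA.
have [k1|k1] := eqVneq (x + y - z) 0.
  apply: (@ge_list 3 A [:: x + y - z; x - y + z; x - y - z; - x + y + z; - x + y - z;
     - x - y - z; v + y + z; v + x + z; v - x + z; v + x + y; v - x + y]);
  [uniq_lia | all_mem3].
apply: (@ge_list 3 A [:: x + y + z; x + y - z; x - y + z; x - y - z; - x + y + z;
   - x + y - z; - x - y + z; - x - y - z; v + y + z; v + x + z; v + x + y]);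
  [uniq_lia | all_mem3].
Qed.

Lemma neq_of_sq (x y : int) : x ^+ 2 != y ^+ 2 -> (x != y) && (x != - y).
Proof. by rewrite eqf_sqr negb_or. Qed.

Lemma normp (A : seq int) p : p != 0 -> p \in A -> - p \in A ->
  exists p', [/\ 0 < p', p' \in A, - p' \in A & p' ^+ 2 = p ^+ 2].
Proof.
move=> p0 pA mpA; case: (ltrP 0 p) => hp.
  by exists p; split.
exists (- p); split; rewrite ?opprK ?sqrrN //; lia.
Qed.

Lemma F0s (A : seq int) a b c v : a \in A -> b \in A -> c \in A -> v \in A ->
  a ^+ 2 != b ^+ 2 -> a ^+ 2 != c ^+ 2 -> b ^+ 2 != c ^+ 2 ->
  a ^+ 2 < v ^+ 2 -> b ^+ 2 < v ^+ 2 -> c ^+ 2 < v ^+ 2 -> (2 <= size (Sn 3 A))%N.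
Proof.
move=> aA bA cA vA h1 h2 h3 h4 h5 h6.
apply: (F0 aA bA cA vA h1 h2 h3).
- by rewrite lt_eqF.
- by rewrite lt_eqF.
- by apply: contraTneq h6 => ->; rewrite ltxx.
Qed.

Lemma F1s (A : seq int) p a b v : p != 0 -> p \in A -> - p \in A -> a \in A -> b \in A ->
  v \in A -> 0 < v -> p ^+ 2 != a ^+ 2 -> p ^+ 2 != b ^+ 2 -> a ^+ 2 != b ^+ 2 ->
  p ^+ 2 < v ^+ 2 -> a ^+ 2 < v ^+ 2 -> b ^+ 2 < v ^+ 2 -> (5 <= size (Sn 3 A))%N.
Proof.
move=> p0 pA mpA aA bA vA v0 h1 h2 h3 h4 h5 h6.
have [p' [p'0 p'A mp'A e]] := normp p0 pA mpA.
rewrite -e in h1 h2 h4.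
move: (neq_of_sq h1) (neq_of_sq h2) (neq_of_sq h3) => /andP[k1 k2] /andP[k3 k4] /andP[k5 k6].
have := sq_lt v0 h4; have := sq_lt v0 h5; have := sq_lt v0 h6.
move=> /andP[l1 l2] /andP[l3 l4] /andP[l5 l6].
apply: (F1 p'0 p'A mp'A aA bA vA) => //.
- by rewrite eq_sym.
- by apply: contra k2 => /eqP ->; rewrite opprK.
- by rewrite eq_sym.
- by apply: contra k4 => /eqP ->; rewrite opprK.
- by rewrite l3 l4.
- by rewrite l1 l2.
Qed.

Lemma F2s (A : seq int) p q e v : p != 0 -> q != 0 -> p \in A -> - p \in A ->
  q \in A -> - q \in A -> e \in A -> v \in A -> 0 < v ->
  p ^+ 2 != q ^+ 2 -> p ^+ 2 != e ^+ 2 -> q ^+ 2 != e ^+ 2 ->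
  p ^+ 2 < v ^+ 2 -> q ^+ 2 < v ^+ 2 -> e ^+ 2 < v ^+ 2 -> (8 <= size (Sn 3 A))%N.
Proof.
move=> p0 q0 pA mpA qA mqA eA vA v0 h1 h2 h3 h4 h5 h6.
have [p' [p'0 p'A mp'A ep]] := normp p0 pA mpA.
have [q' [q'0 q'A mq'A eq]] := normp q0 qA mqA.
rewrite -ep -eq in h1 h2 h3 h4 h5.
move: (neq_of_sq h1) (neq_of_sq h2) (neq_of_sq h3) => /andP[k1 k2] /andP[k3 k4] /andP[k5 k6].
have := sq_lt v0 h4; have := sq_lt v0 h5; have := sq_lt v0 h6.
move=> /andP[l1 l2] /andP[l3 l4] /andP[l5 l6].
have e1 : e != p' by rewrite eq_sym.
have e2 : e != - p' by apply: contra k4 => /eqP ->; rewrite opprK.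
have e3 : e != q' by rewrite eq_sym.
have e4 : e != - q' by apply: contra k6 => /eqP ->; rewrite opprK.
have ev : - v < e < v by rewrite l1 l2.
case: (ltgtP p' q') => hpq; last by rewrite hpq eqxx in k1.
  by apply: (@F2 A p' q' e v).
by apply: (@F2 A q' p' e v).
Qed.

Lemma F3s (A : seq int) x y z v : x != 0 -> y != 0 -> z != 0 ->
  x \in A -> - x \in A -> y \in A -> - y \in A -> z \in A -> - z \in A -> v \in A -> 0 < v ->
  x ^+ 2 != y ^+ 2 -> x ^+ 2 != z ^+ 2 -> y ^+ 2 != z ^+ 2 ->
  x ^+ 2 < v ^+ 2 -> y ^+ 2 < v ^+ 2 -> z ^+ 2 < v ^+ 2 -> (11 <= size (Sn 3 A))%N.
Proof.
move=> x0 y0 z0 xA mxA yA myA zA mzA vA v0 h1 h2 h3 h4 h5 h6.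
have [x' [x'0 x'A mx'A ex]] := normp x0 xA mxA.
have [y' [y'0 y'A my'A ey]] := normp y0 yA myA.
have [z' [z'0 z'A mz'A ez]] := normp z0 zA mzA.
rewrite -ex -ey -ez in h1 h2 h3 h4 h5 h6.
move: (neq_of_sq h1) (neq_of_sq h2) (neq_of_sq h3) => /andP[k1 _] /andP[k3 _] /andP[k5 _].
have := sq_lt v0 h4; have := sq_lt v0 h5; have := sq_lt v0 h6.
move=> /andP[_ l2] /andP[_ l4] /andP[_ l6].
clear h1 h2 h3 h4 h5 h6 ex ey ez xA mxA yA myA zA mzA x0 y0 z0.
case: (ltgtP x' y') => hxy; last by rewrite hxy eqxx in k1.
- case: (ltgtP y' z') => hyz; last by rewrite hyz eqxx in k5.
  + by apply: (@F3 A x' y' z' v) => //; apply: lt_trans hyz.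
  + case: (ltgtP x' z') => hxz; last by rewrite hxz eqxx in k3.
    * by apply: (@F3 A x' z' y' v).
    * by apply: (@F3 A z' x' y' v).
- case: (ltgtP y' z') => hyz; last by rewrite hyz eqxx in k5.
  + case: (ltgtP x' z') => hxz; last by rewrite hxz eqxx in k3.
    * by apply: (@F3 A y' x' z' v).
    * by apply: (@F3 A y' z' x' v).
  + by apply: (@F3 A z' y' x' v) => //; apply: lt_trans hxy.
Qed.

Lemma msq_le_size (A : seq int) : (msq A <= size A)%N.
Proof. by rewrite /msq; apply: leq_trans (size_undup _) _; rewrite size_map. Qed.

Lemma msq_opp (A : seq int) : msq [seq - a | a <- A] = msq A.
Proof.
rewrite /msq -map_comp; congr (size (undup _)).
by apply: eq_map => a /=; rewrite sqrrN.
Qed.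

Lemma msq_rem_le (A : seq int) v : uniq A -> v \in A -> (msq A <= (msq (rem v A)).+1)%N.
Proof.
move=> uA vA; rewrite /msq.
have -> : ((size (undup [seq a ^+ 2 | a <- rem v A])).+1 =
           size (v ^+ 2 :: undup [seq a ^+ 2 | a <- rem v A]))%N by [].
apply: uniq_leq_size; first exact: undup_uniq.
move=> r; rewrite mem_undup => /mapP[a aA ->]; rewrite inE mem_undup.
case: (eqVneq a v) => [->|av]; first by rewrite eqxx.
apply/orP; right; apply: (map_f (fun a => a ^+ 2)).
by rewrite mem_rem_uniq // inE av.
Qed.

Lemma msq_rem_mirror (A : seq int) v : uniq A -> v \in A -> - v \in A -> v != 0 ->
  (msq A <= msq (rem v A))%N.
Proof.
move=> uA vA mvA v0; rewrite /msq.
apply: uniq_leq_size; first exact: undup_uniq.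
move=> r; rewrite mem_undup => /mapP[a aA ->]; rewrite mem_undup.
case: (eqVneq a v) => [->|av].
  rewrite -sqrrN; apply: (map_f (fun a => a ^+ 2)); rewrite mem_rem_uniq // inE mvA andbT.
  by apply/eqP => h; move/eqP: v0; apply; lia.
apply: (map_f (fun a => a ^+ 2)).
by rewrite mem_rem_uniq // inE av.
Qed.

Lemma msq_rem_single (A : seq int) v : uniq A -> v \in A ->
  v ^+ 2 \notin [seq a ^+ 2 | a <- rem v A] -> msq A = (msq (rem v A)).+1.
Proof.
move=> uA vA vn; apply/eqP; rewrite eqn_leq msq_rem_le //=.
rewrite /msq.
have -> : ((size (undup [seq a ^+ 2 | a <- rem v A])).+1 =
           size (v ^+ 2 :: undup [seq a ^+ 2 | a <- rem v A]))%N by [].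
apply: uniq_leq_size; first by rewrite /= mem_undup vn undup_uniq.
move=> r; rewrite inE !mem_undup => /orP[/eqP ->|/mapP[a /mem_rem aA ->]];
  by apply: (map_f (fun a => a ^+ 2)).
Qed.

Lemma top_elem (A : seq int) : uniq A -> (2 <= size A)%N ->
  exists v, [/\ 0 < v, (v \in A) || (v \in [seq - a | a <- A]) &
                forall a, a \in A -> a ^+ 2 <= v ^+ 2].
Proof.
move=> uA sA.
have ne : [seq a ^+ 2 | a <- A] != [::] by case: (A) sA.
case: (seq_max ne) => r /mapP[a aA ->] Hr.
have Ha : forall b, b \in A -> b ^+ 2 <= a ^+ 2.
  by move=> b bA; apply: Hr; apply: (map_f (fun a => a ^+ 2)).
case: (ltgtP a 0) => ha.
- exists (- a); split; first by lia.
    by apply/orP; right; apply: map_f.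
  by move=> b bA; rewrite sqrrN; apply: Ha.
- by exists a; split; rewrite ?aA.
- exfalso.
  have sub : {subset A <= [:: 0]}.
    move=> b bA; have := Ha b bA; rewrite ha inE => h.
    by apply/eqP; nia.
  by have := uniq_leq_size uA sub; move: sA => /=; lia.
Qed.

Ltac slia2 :=
  repeat match goal with
  | H : context [ Sn _ _ ] |- _ => clear H
  | H : forall _, _ |- _ => clear H
  | H : is_true (uniq _) |- _ => clear H
  | H : is_true (_ \in _) |- _ => clear H
  | H : is_true (_ \notin _) |- _ => clear H
  | H : is_true (all _ _) |- _ => clear H
  | H : is_true (_ != _) |- _ => clear H
  | H : is_true (_ < _) |- _ => clear H
  | H : _ = _ |- _ => clear H
  end; lia.

Lemma sub_L (A' L : seq int) :
  (forall b, b \in A' -> exists x, x \in L /\ (b = x \/ b = - x)) ->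
  {subset A' <= L ++ [seq - x | x <- L & (- x \in A') && (x != 0)]}.
Proof.
move=> h b bA; case: (h b bA) => x [xL [->|ebx]]; rewrite mem_cat ?xL //.
case: (eqVneq x 0) => [x0|x0].
  by rewrite ebx x0 oppr0 -x0 xL.
apply/orP; right; rewrite ebx; apply: (map_f (fun x => - x)); rewrite mem_filter xL x0 andbT.
by rewrite andbT -ebx.
Qed.

Lemma base3 (A : seq int) v : uniq A -> v \in A -> 0 < v -> - v \notin A ->
  (forall a, a \in A -> a ^+ 2 <= v ^+ 2) -> msq A = 4%N ->
  (3 * size A <= size (Sn 3 A) + 10)%N.
Proof.
move=> uA vA v0 mvA Hv m4.
set A' := rem v A.
have uA' : uniq A' by apply: rem_uniq.
have subA : {subset A' <= A} by move=> x /mem_rem.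
have vA' : v \notin A' by rewrite mem_rem_uniq // inE eqxx.
have hA' : forall a, a \in A' -> a ^+ 2 < v ^+ 2.
  move=> a aA; rewrite lt_neqAle Hv ?andbT ?subA //.
  apply/negP => /eqP/sq_eq [ea|ea].
    by move: vA'; rewrite -ea aA.
  by move: mvA; rewrite -ea subA.
have vn : v ^+ 2 \notin [seq a ^+ 2 | a <- A'].
  by apply/negP => /mapP[a aA e]; have := hA' a aA; rewrite -e ltxx.
have m3 := msq_rem_single uA vA vn; rewrite m4 -/A' in m3.
have sA : size A = (size A').+1 by rewrite size_rem //; case: (A) vA.
have hR : forall r, (r \in undup [seq a ^+ 2 | a <- A']) = (r \in [seq a ^+ 2 | a <- A']).
  by move=> r; rewrite mem_undup.
have uR := undup_uniq [seq a ^+ 2 | a <- A'].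
move: m3 hR uR; rewrite /msq.
case: (undup _) => [|r1 [|r2 [|r3 [|r4 R]]]] //= _ hR.
rewrite !inE !negb_or andbT => /andP[/andP[n12 n13] n23].
have pick : forall r, r \in [:: r1; r2; r3] -> exists2 a, a \in A' & a ^+ 2 = r.
  by move=> r; rewrite hR => /mapP[a aA ->]; exists a.
have [a1 a1A e1] := pick r1 (mem_head _ _).
have [a2 a2A e2] : exists2 a, a \in A' & a ^+ 2 = r2 by apply: pick; rewrite !inE eqxx ?orbT.
have [a3 a3A e3] : exists2 a, a \in A' & a ^+ 2 = r3 by apply: pick; rewrite !inE eqxx ?orbT.
have sub := @sub_L A' [:: a1; a2; a3].
have cls : forall b, b \in A' -> exists x, x \in [:: a1; a2; a3] /\ (b = x \/ b = - x).
  move=> b bA; have : b ^+ 2 \in [:: r1; r2; r3] by rewrite hR; apply: map_f.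
  rewrite !inE => /orP[/eqP|/orP[/eqP|/eqP]] eb.
  - by exists a1; split; [rewrite inE eqxx | apply: sq_eq; rewrite eb e1].
  - by exists a2; split; [rewrite !inE eqxx ?orbT | apply: sq_eq; rewrite eb e2].
  - by exists a3; split; [rewrite !inE eqxx ?orbT | apply: sq_eq; rewrite eb e3].
have szb := uniq_leq_size uA' (sub cls).
have d12 : a1 ^+ 2 != a2 ^+ 2 by rewrite e1 e2.
have d13 : a1 ^+ 2 != a3 ^+ 2 by rewrite e1 e3.
have d23 : a2 ^+ 2 != a3 ^+ 2 by rewrite e2 e3.
have a1A0 := subA a1 a1A; have a2A0 := subA a2 a2A; have a3A0 := subA a3 a3A.
have l1 := hA' a1 a1A; have l2 := hA' a2 a2A; have l3 := hA' a3 a3A.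
rewrite sA.
move: szb; rewrite size_cat /=.
case c1: ((- a1 \in A') && (a1 != 0)); case c2: ((- a2 \in A') && (a2 != 0));
  case c3: ((- a3 \in A') && (a3 != 0)) => /= szb.
- move/andP: c1 => [m1 z1]; move/andP: c2 => [m2 z2]; move/andP: c3 => [m3 z3].
  have := F3s z1 z2 z3 a1A0 (subA _ m1) a2A0 (subA _ m2) a3A0 (subA _ m3) vA v0 d12 d13 d23 l1 l2 l3.
  move: szb; set x := size A'; set y := size (Sn 3 A); clearbody x y; slia2.
- move/andP: c1 => [m1 z1]; move/andP: c2 => [m2 z2].
  have := F2s z1 z2 a1A0 (subA _ m1) a2A0 (subA _ m2) a3A0 vA v0 d12 d13 d23 l1 l2 l3.
  move: szb; set x := size A'; set y := size (Sn 3 A); clearbody x y; slia2.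
- move/andP: c1 => [m1 z1]; move/andP: c3 => [m3 z3].
  have := F2s z1 z3 a1A0 (subA _ m1) a3A0 (subA _ m3) a2A0 vA v0 d13 d12 _ l1 l3 l2.
  rewrite eq_sym d23 => /(_ isT).
  move: szb; set x := size A'; set y := size (Sn 3 A); clearbody x y; slia2.
- move/andP: c1 => [m1 z1].
  have := F1s z1 a1A0 (subA _ m1) a2A0 a3A0 vA v0 d12 d13 d23 l1 l2 l3.
  move: szb; set x := size A'; set y := size (Sn 3 A); clearbody x y; slia2.
- move/andP: c2 => [m2 z2]; move/andP: c3 => [m3 z3].
  have := F2s z2 z3 a2A0 (subA _ m2) a3A0 (subA _ m3) a1A0 vA v0 d23 _ _ l2 l3 l1.
  rewrite eq_sym d12 eq_sym d13 => /(_ isT isT).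
  move: szb; set x := size A'; set y := size (Sn 3 A); clearbody x y; slia2.
- move/andP: c2 => [m2 z2].
  have := F1s z2 a2A0 (subA _ m2) a1A0 a3A0 vA v0 _ d23 d13 l2 l1 l3.
  rewrite eq_sym d12 => /(_ isT).
  move: szb; set x := size A'; set y := size (Sn 3 A); clearbody x y; slia2.
- move/andP: c3 => [m3 z3].
  have := F1s z3 a3A0 (subA _ m3) a1A0 a2A0 vA v0 _ _ d12 l3 l1 l2.
  rewrite eq_sym d13 eq_sym d23 => /(_ isT isT).
  move: szb; set x := size A'; set y := size (Sn 3 A); clearbody x y; slia2.
- have := F0s a1A0 a2A0 a3A0 vA d12 d13 d23 l1 l2 l3.
  move: szb; set x := size A'; set y := size (Sn 3 A); clearbody x y; slia2.
Qed.

Lemma Q3' (A : seq int) : uniq A -> (4 <= msq A)%N -> (3 * size A <= size (Sn 3 A) + 10)%N.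
Proof.
move: {2}(size A) (erefl (size A)) => k; elim/ltn_ind: k A => k IH A sk uA hm.
have s2 : (2 <= size A)%N by have := msq_le_size A; lia.
have [v [v0 vin Hv]] := top_elem uA s2.
have core : forall B : seq int, uniq B -> size B = k -> (4 <= msq B)%N -> v \in B ->
    (forall b, b \in B -> b ^+ 2 <= v ^+ 2) -> (3 * size B <= size (Sn 3 B) + 10)%N.
  move=> B uB sB hmB vB HvB.
  case: (boolP ((- v \in B) || (5 <= msq B)%N)) => [hc|].
    have hm' : (4 <= msq (rem v B))%N.
      case/orP: hc => [mvB|h5].
        have v0' : v != 0 by rewrite gt_eqF.
        by apply: leq_trans hmB (msq_rem_mirror uB vB mvB v0').
      by rewrite -ltnS; apply: leq_trans h5 (msq_rem_le uB vB).
    have sB' : size (rem v B) = (k.-1)%N by rewrite size_rem // sB.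
    have k0 : (0 < k)%N by rewrite -sB; case: (B) vB.
    have kk : (k.-1 < k)%N by rewrite prednK.
    have ih := IH k.-1 kk (rem v B) sB' (rem_uniq _ uB) hm'.
    have r1 := R1 (ltn0Sn 2) uB vB v0 HvB hm'.
    move: ih r1; rewrite sB' sB.
    set x := size (Sn 3 (rem v B)); set y := size (Sn 3 B); clearbody x y; lia.
  rewrite negb_or -ltnNge => /andP[mvB h4].
  apply: (base3 uB vB v0 mvB HvB); apply/eqP; rewrite eqn_leq hmB andbT -ltnS; exact: h4.
case/orP: vin => vin.
  by apply: core.
rewrite -size_Sn_opp -(size_map (fun a => - a) A).
apply: core.
- by rewrite map_inj_uniq //; apply: oppr_inj.
- by rewrite size_map.
- by rewrite msq_opp.
- done.
- by move=> b /mapP[a aA ->]; rewrite sqrrN; apply: Hv.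
Qed.

Lemma mainQ n : (3 <= n)%N -> forall A : seq int, uniq A -> (2 * n + 1 <= size A)%N ->
  Tb n (size A) <= (size (Sn n A))%:Z.
Proof.
move=> n3; have [m ->] : exists m, n = (3 + m)%N by exists (n - 3)%N; lia.
elim: m => [|m IH] A uA hA.
  have h := Q3' uA (msq_ge uA hA).
  rewrite /Tb; move: h; set x := size A; set y := size (Sn 3 A); clearbody x y.
  rewrite /= => h. have -> : 'C(3, 2) = 3%N by []. lia.
have s2 : (2 <= size A)%N by move: hA; lia.
have [v [v0 vin Hv]] := top_elem uA s2.
have n3' : (3 <= 3 + m)%N by lia.
have IH' : forall B : seq int, uniq B -> (2 * (3 + m) + 1 <= size B)%N ->
    Tb (3 + m) (size B) <= (size (Sn (3 + m) B))%:Z by exact: IH.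
rewrite [(3 + m.+1)%N]addnS in hA *.
case/orP: vin => vin.
  exact: step n3' IH' uA hA vin v0 Hv.
rewrite -size_Sn_opp -(size_map (fun a => - a) A).
apply: step n3' IH' _ _ vin v0 _.
- by rewrite map_inj_uniq //; apply: oppr_inj.
- by rewrite size_map.
- by move=> b /mapP[a aA ->]; rewrite sqrrN; apply: Hv.
Qed.

End Aux.
Import Aux.

Theorem theorem1p5 (n k : nat) (A : seq int) :
  (2 < n)%N -> uniq A -> size A = k -> (2 * n + 1 <= k)%N ->
  ((k%:Z - 1) * n%:Z - 3 * ('C(n, 2))%:Z + 1 < (size (Sn n A))%:Z).
Proof.
move=> n2 uA sA hk.
have hA : (2 * n + 1 <= size A)%N by rewrite sA.
have h := mainQ n2 uA hA.
move: h; rewrite /Tb sA.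
set s := size (Sn n A); set c := 'C(n, 2); clearbody s c.
lia.
Qed.
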